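(* Let $(X,(f_n))$ be a complex situation such that $f_m(f_n(x))=f_m(x)$ whenever $m<n$ and both sides are defined. Then $\{(2^\omega,\mathbb{G}_0),(X,A^f),(X,(A^f)^{-1})\}$ is a $\preceq^{inj}_B$-antichain, i.e., its members are pairwise $\preceq^{inj}_B$-incomparable.
   Context: For a sequence $(f_n)$ of partial functions, $A^f:=\bigcup_n\mathrm{Graph}(f_n)$. A complex situation is a pair $(X,(f_n)_{n\in\omega})$ where $X$ is a nonempty Polish space, each $f_n$ is a partial continuous open map on $X$ whose domain and range are open in $X$, and $\Delta(X)\subseteq\overline{A^f}\setminus A^f$. $(X,A)\preceq^{inj}_B(Y,B)$ means there is an injective Borel $h:X\to Y$ with $A\subseteq(h\times h)^{-1}(B)$. Let $\psi:\omega\to 2^{<\omega}$ be the bijection enumerating finite binary sequences by length and then lexicographically; $s_n:=\psi(n)0^{n-|\psi(n)|}$ and $\mathbb{G}_0:=\{(s_n0\gamma,s_n1\gamma):n\in\omega,\gamma\in2^\omega\}$. *)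

(* Defs.v *)
From Stdlib Require Import Reals Lra Lia Arith List.
Open Scope R_scope.

Definition Polish {X : Type} (O : (X -> Prop) -> Prop) : Prop :=
  exists d : X -> X -> R,
    (forall x y, 0 <= d x y) /\
    (forall x y, d x y = 0 <-> x = y) /\
    (forall x y, d x y = d y x) /\
    (forall x y z, d x z <= d x y + d y z) /\
    (forall U : X -> Prop,
        O U <-> (forall x, U x -> exists eps, 0 < eps /\
                   forall y, d x y < eps -> U y)) /\
    (forall s : nat -> X,
        (forall eps, 0 < eps -> exists N, forall m n,
            (N <= m)%nat -> (N <= n)%nat -> d (s m) (s n) < eps) ->
        exists l, forall eps, 0 < eps -> exists N, forall n,
            (N <= n)%nat -> d (s n) l < eps) /\
    (exists D : nat -> X, forall x eps, 0 < eps -> exists n, d x (D n) < eps).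

Inductive Borel {X : Type} (O : (X -> Prop) -> Prop) : (X -> Prop) -> Prop :=
| Borel_open : forall U, O U -> Borel O U
| Borel_compl : forall U, Borel O U -> Borel O (fun x => ~ U x)
| Borel_union : forall F : nat -> X -> Prop,
    (forall n, Borel O (F n)) -> Borel O (fun x => exists n, F n x)
| Borel_ext : forall U V, (forall x, U x <-> V x) -> Borel O U -> Borel O V.

Definition Borel_map {X Y : Type} (OX : (X -> Prop) -> Prop)
  (OY : (Y -> Prop) -> Prop) (h : X -> Y) : Prop :=
  forall B, Borel OY B -> Borel OX (fun x => B (h x)).

Definition inj_Borel_le {X Y : Type}
  (OX : (X -> Prop) -> Prop) (A : X -> X -> Prop)
  (OY : (Y -> Prop) -> Prop) (B : Y -> Y -> Prop) : Prop :=
  exists h : X -> Y,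
    Borel_map OX OY h /\ (forall x x', h x = h x' -> x = x') /\
    (forall x x', A x x' -> B (h x) (h x')).

(** * Complex situations.
   A partial map f_n is given by its domain [D n] and a total function
   [f n] whose values outside [D n] are irrelevant. *)

Definition graph_union {X : Type} (D : nat -> X -> Prop) (f : nat -> X -> X)
  : X -> X -> Prop :=
  fun x y => exists n, D n x /\ f n x = y.

Definition closure2 {X : Type} (O : (X -> Prop) -> Prop) (A : X -> X -> Prop)
  (x y : X) : Prop :=
  forall U V, O U -> O V -> U x -> V y -> exists a b, U a /\ V b /\ A a b.

Definition complex_situation {X : Type} (O : (X -> Prop) -> Prop)
  (D : nat -> X -> Prop) (f : nat -> X -> X) : Prop :=
  Polish O /\ inhabited X /\
  (forall n, O (D n)) /\
  (forall n, O (fun y => exists x, D n x /\ f n x = y)) /\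
  (forall n V, O V -> O (fun x => D n x /\ V (f n x))) /\
  (forall n U, O U -> O (fun y => exists x, D n x /\ U x /\ f n x = y)) /\
  (forall x, closure2 O (graph_union D f) x x /\ ~ graph_union D f x x).

Definition cantor := nat -> bool.

Definition cantor_open (U : cantor -> Prop) : Prop :=
  forall x, U x -> exists N, forall y,
      (forall i, (i < N)%nat -> y i = x i) -> U y.

(* psi n = binary expansion of n+1 with its leading 1 removed; this
   enumerates 2^{<omega} by length and then lexicographically. *)
Definition psi (n : nat) : list bool :=
  let k := Nat.log2 (S n) in
  map (fun i => Nat.testbit (S n) (k - 1 - i)) (seq 0 k).

Definition s_seq (n : nat) : list bool :=
  psi n ++ repeat false (n - length (psi n)).

Definition concat_seq (s : list bool) (b : bool) (g : cantor) : cantor :=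
  fun i => if Nat.ltb i (length s) then nth i s false
           else if Nat.eqb i (length s) then b
           else g (i - S (length s))%nat.

Definition G0 (x y : cantor) : Prop :=
  exists n (g : cantor), x = concat_seq (s_seq n) false g /\
                         y = concat_seq (s_seq n) true g.

Definition inv_rel {X : Type} (A : X -> X -> Prop) : X -> X -> Prop :=
  fun x y => A y x.

(* Main.v *)
From Stdlib Require Import Reals Lra Lia Arith List Classical ClassicalEpsilon FunctionalExtensionality PropExtensionality.
From Stdlib Require Cantor.
Require Import Defs.
Open Scope R_scope.

(** * Part A: generic Baire category theory *)
Section Baire.
Context {T : Type} (O : (T -> Prop) -> Prop).

Definition TopAx : Prop :=
  (forall U V, O U -> O V -> O (fun x => U x /\ V x)) /\
  (forall F : (T -> Prop) -> Prop, (forall U, F U -> O U) ->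
      O (fun x => exists U, F U /\ U x)) /\
  O (fun _ => True).

Definition nwd (F : T -> Prop) : Prop :=
  forall U, O U -> (exists x, U x) ->
    exists V, O V /\ (exists x, V x) /\ (forall x, V x -> U x) /\
              (forall x, V x -> ~ F x).

Definition meager (M : T -> Prop) : Prop :=
  exists F : nat -> T -> Prop, (forall k, nwd (F k)) /\
    forall x, M x -> exists k, F k x.

Definition BP (S : T -> Prop) : Prop :=
  exists U, O U /\ meager (fun x => ~ (S x <-> U x)).

Definition BCT : Prop :=
  forall M U, meager M -> O U -> (exists x, U x) -> exists x, U x /\ ~ M x.

Lemma nwd_empty : nwd (fun _ => False).
Proof. intros U HU [x Hx]. exists U; repeat split; eauto. Qed.

Lemma nwd_sub F G : nwd G -> (forall x, F x -> G x) -> nwd F.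
Proof.
  intros H Hs U HU Hne. destruct (H U HU Hne) as (V & HV & Hn & HVU & HVG).
  exists V; repeat split; auto. intros x Hx HF. apply (HVG x Hx), Hs, HF.
Qed.

Lemma meager_sub M M' : meager M' -> (forall x, M x -> M' x) -> meager M.
Proof.
  intros (F & HF & Hc) Hs. exists F; split; auto.
Qed.

Lemma meager_empty : meager (fun _ => False).
Proof. exists (fun _ _ => False). split. intros; apply nwd_empty. tauto. Qed.

Lemma nwd_meager F : nwd F -> meager F.
Proof.
  intros H. exists (fun _ => F). split; auto. intros x Hx; exists 0%nat; auto.
Qed.

Lemma meager_union (M : nat -> T -> Prop) :
  (forall n, meager (M n)) -> meager (fun x => exists n, M n x).
Proof.
  intros H.
  assert (Hc : forall n, {F : nat -> T -> Prop | (forall k, nwd (F k)) /\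
                 forall x, M n x -> exists k, F k x}).
  { intros n. apply constructive_indefinite_description, H. }
  exists (fun k => let p := Cantor.of_nat k in proj1_sig (Hc (fst p)) (snd p)).
  split.
  - intros k. simpl. apply (proj1 (proj2_sig (Hc (fst (Cantor.of_nat k))))). 
  - intros x [n Hn]. destruct (proj2_sig (Hc n)) as [_ Hx].
    destruct (Hx x Hn) as [k Hk]. exists (Cantor.to_nat (n, k)).
    rewrite Cantor.cancel_of_to. simpl. exact Hk.
Qed.

Lemma meager_union_surj {I : Type} (e : nat -> I) (M : I -> T -> Prop) :
  (forall i, exists n, e n = i) ->
  (forall i, meager (M i)) -> meager (fun x => exists i, M i x).
Proof.
  intros Hs H. apply meager_sub with (fun x => exists n, M (e n) x).
  - apply meager_union. intros; apply H.
  - intros x [i Hi]. destruct (Hs i) as [n <-]. eauto.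
Qed.

Lemma meager_union2 M1 M2 : meager M1 -> meager M2 ->
  meager (fun x => M1 x \/ M2 x).
Proof.
  intros H1 H2.
  apply meager_sub with (fun x => exists n : nat, (if Nat.eqb n 0 then M1 else M2) x).
  - apply meager_union. intros [|n]; simpl; auto.
  - intros x [Hx|Hx]; [exists 0%nat | exists 1%nat]; simpl; auto.
Qed.

Section WithAx.
Hypothesis HT : TopAx.

Lemma O_inter U V : O U -> O V -> O (fun x => U x /\ V x).
Proof. apply HT. Qed.
Lemma O_full : O (fun _ => True).
Proof. apply HT. Qed.
Lemma O_union (F : (T -> Prop) -> Prop) : (forall U, F U -> O U) ->
      O (fun x => exists U, F U /\ U x).
Proof. apply HT. Qed.

Lemma O_ext U V : O U -> (forall x, U x <-> V x) -> O V.
Proof.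
  intros HU H.
  assert (E : U = V) by (apply functional_extensionality; intro x;
                         apply propositional_extensionality; auto).
  subst; auto.
Qed.

Lemma O_empty : O (fun _ => False).
Proof.
  eapply O_ext. apply (O_union (fun _ => False)). tauto.
  intros x; split; [intros (U & [] & _)| tauto].
Qed.

Lemma O_const (P : Prop) : O (fun _ => P).
Proof.
  destruct (classic P) as [H|H].
  - eapply O_ext. apply O_full. tauto.
  - eapply O_ext. apply O_empty. tauto.
Qed.

Lemma O_unionN (F : nat -> T -> Prop) : (forall n, O (F n)) ->
  O (fun x => exists n, F n x).
Proof.
  intros H. eapply O_ext. apply (O_union (fun U => exists n, U = F n)).
  - intros U [n ->]; auto.
  - intros x; split.
    + intros (U & [n ->] & Hx); eauto.
    + intros [n Hn]; exists (F n); eauto.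
Qed.

Lemma BP_open U : O U -> BP U.
Proof.
  intros HU. exists U; split; auto. apply meager_sub with (fun _ => False).
  apply meager_empty. intros x Hx; apply Hx; tauto.
Qed.

Lemma BP_compl S : BP S -> BP (fun x => ~ S x).
Proof.
  intros (U & HU & HM).
  set (V := fun x => exists W, (O W /\ forall y, W y -> ~ U y) /\ W x).
  assert (HV : O V) by (apply O_union; tauto).
  exists V; split; auto.
  apply meager_sub with (fun x => ~ (S x <-> U x) \/ (~ U x /\ ~ V x)).
  - apply meager_union2; auto. apply nwd_meager.
    intros P HP [p Hp].
    destruct (classic (exists x, P x /\ U x)) as [[x [Hx1 Hx2]]|Hn].
    + exists (fun y => P y /\ U y); repeat split; eauto.
      * apply O_inter; auto.
      * intros y [Hy _]. auto.
      * intros y [_ Hy] [Hu _]. auto.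
    + exists P; repeat split; eauto.
      intros y Hy [_ HnV]. apply HnV. exists P; split; auto.
      split; auto. intros z Hz Hu. apply Hn; eauto.
  - intros x Hx.
    destruct (classic (U x)) as [Hu|Hu].
    + left. intros Hiff. apply Hx. split.
      * intros Hs; exfalso. destruct (classic (V x)) as [Hv|Hv].
        -- destruct Hv as (W & [_ HW] & Hw). apply (HW x Hw Hu).
        -- apply Hs. apply Hiff. auto.
      * intros (W & [_ HW] & Hw). exfalso; apply (HW x Hw Hu).
    + destruct (classic (V x)) as [Hv|Hv].
      * left. intros Hiff. apply Hx. split; auto.
        intros _ Hs. apply Hu. apply Hiff; auto.
      * right; auto.
Qed.

Lemma BP_union (S : nat -> T -> Prop) : (forall n, BP (S n)) ->
  BP (fun x => exists n, S n x).
Proof.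
  intros H.
  assert (Hc : forall n, {U | O U /\ meager (fun x => ~ (S n x <-> U x))}).
  { intros n; apply constructive_indefinite_description, H. }
  exists (fun x => exists n, proj1_sig (Hc n) x). split.
  - apply O_unionN. intros n. apply (proj1 (proj2_sig (Hc n))).
  - apply meager_sub with (fun x => exists n, ~ (S n x <-> proj1_sig (Hc n) x)).
    + apply meager_union. intros n. apply (proj2 (proj2_sig (Hc n))).
    + intros x Hx. apply NNPP. intros Hn. apply Hx.
      split; intros [n Hn']; exists n; apply NNPP; intros Hc'; apply Hn;
        exists n; intros Hi; apply Hc', Hi; auto.
Qed.

Lemma BP_ext S S' : BP S -> (forall x, S x <-> S' x) -> BP S'.
Proof.
  intros (U & HU & HM) H. exists U; split; auto.
  eapply meager_sub. apply HM. intros x Hx Hi. apply Hx. rewrite <- H. auto.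
Qed.

Lemma Borel_BP S : Borel O S -> BP S.
Proof.
  induction 1.
  - apply BP_open; auto.
  - apply BP_compl; auto.
  - apply BP_union; auto.
  - eapply BP_ext; eauto.
Qed.

Lemma cover_lemma (W0 : T -> Prop) (E : nat -> T -> Prop) :
  BCT -> O W0 -> (exists x, W0 x) -> (forall n, BP (E n)) ->
  (forall x, W0 x -> exists n, E n x) ->
  exists n W, O W /\ (exists x, W x) /\ (forall x, W x -> W0 x) /\
    meager (fun x => W x /\ ~ E n x).
Proof.
  intros Hb HW0 Hne HE Hcov.
  assert (Hc : forall n, {U | O U /\ meager (fun x => ~ (E n x <-> U x))}).
  { intros n; apply constructive_indefinite_description, HE. }
  destruct (classic (exists n x, W0 x /\ proj1_sig (Hc n) x)) as [[n [x [Hx1 Hx2]]]|Hn].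
  - exists n, (fun x => proj1_sig (Hc n) x /\ W0 x). repeat split.
    + apply O_inter; auto. apply (proj1 (proj2_sig (Hc n))).
    + eauto.
    + tauto.
    + eapply meager_sub. apply (proj2 (proj2_sig (Hc n))). intros y [[Hy1 Hy2] Hy3] Hi.
      apply Hy3, Hi. auto.
  - exfalso.
    assert (HM : meager (fun x => exists n, ~ (E n x <-> proj1_sig (Hc n) x))).
    { apply meager_union. intros n. apply (proj2 (proj2_sig (Hc n))). }
    destruct (Hb _ _ HM HW0 Hne) as [x [Hx Hnx]].
    apply Hnx. destruct (Hcov x Hx) as [n Hn'].
    exists n. intros Hi. apply Hn. exists n, x. split; auto. apply Hi; auto.
Qed.

End WithAx.
End Baire.


Section BorelFacts.
Context {T : Type} (O : (T -> Prop) -> Prop) (HT : TopAx O).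

Lemma Borel_compl' S : Borel O S -> Borel O (fun x => ~ S x).
Proof. apply Borel_compl. Qed.

Lemma Borel_full : Borel O (fun _ => True).
Proof. apply Borel_open. apply O_full; auto. Qed.

Lemma Borel_inter A B : Borel O A -> Borel O B -> Borel O (fun x => A x /\ B x).
Proof.
  intros HA HB.
  apply Borel_ext with (fun x => ~ exists n : nat, (if Nat.eqb n 0 then fun y => ~ A y else fun y => ~ B y) x).
  - intros x; split.
    + intros H; split; apply NNPP; intros Hn; apply H; [exists 0%nat | exists 1%nat]; auto.
    + intros [H1 H2] [[|n] Hn]; simpl in Hn; auto.
  - apply Borel_compl, Borel_union. intros [|n]; simpl; apply Borel_compl; auto.
Qed.

Lemma Borel_unionN (F : nat -> T -> Prop) : (forall n, Borel O (F n)) ->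
  Borel O (fun x => exists n, F n x).
Proof. apply Borel_union. Qed.

Lemma Borel_const (P : Prop) : Borel O (fun _ => P).
Proof. apply Borel_open, O_const; auto. Qed.

Lemma Borel_ext' U V : Borel O U -> (forall x, U x <-> V x) -> Borel O V.
Proof. intros; eapply Borel_ext; eauto. Qed.

Lemma Borel_or A B : Borel O A -> Borel O B -> Borel O (fun x => A x \/ B x).
Proof.
  intros HA HB. apply Borel_ext with (fun x => ~ (~ A x /\ ~ B x)).
  - intros x; tauto.
  - apply Borel_compl, Borel_inter; apply Borel_compl; auto.
Qed.

End BorelFacts.

Section BorelMaps.
Context {T1 T2 : Type} (O1 : (T1 -> Prop) -> Prop) (O2 : (T2 -> Prop) -> Prop).

Lemma cont_Borel_map (p : T1 -> T2) :
  (forall U, O2 U -> O1 (fun x => U (p x))) -> Borel_map O1 O2 p.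
Proof.
  intros H B HB. induction HB.
  - apply Borel_open; auto.
  - apply Borel_compl; auto.
  - apply Borel_union; auto.
  - eapply Borel_ext; [|eauto]. intros x; apply H0.
Qed.

Lemma partial_preimage_Borel (HT1 : TopAx O1) (D : T1 -> Prop) (g : T1 -> T2) :
  O1 D -> (forall V, O2 V -> O1 (fun x => D x /\ V (g x))) ->
  forall B, Borel O2 B -> Borel O1 (fun x => D x /\ B (g x)).
Proof.
  intros HD Hc B HB. induction HB.
  - apply Borel_open; auto.
  - apply Borel_ext with (fun x => D x /\ ~ (D x /\ U (g x))).
    + intros x; tauto.
    + apply Borel_inter; auto. apply Borel_open; auto. apply Borel_compl; auto.
  - apply Borel_ext with (fun x => exists n, D x /\ F n (g x)).
    + intros x; split; [intros [n [H1 H2]]; eauto | intros [H1 [n H2]]; eauto].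
    + apply Borel_union; auto.
  - eapply Borel_ext; [|eauto]. intros x; simpl. rewrite H. tauto.
Qed.

End BorelMaps.

Lemma Borel_map_comp {T1 T2 T3 : Type} (O1 : (T1 -> Prop) -> Prop)
  (O2 : (T2 -> Prop) -> Prop) (O3 : (T3 -> Prop) -> Prop) p q :
  Borel_map O1 O2 p -> Borel_map O2 O3 q -> Borel_map O1 O3 (fun x => q (p x)).
Proof. intros H1 H2 B HB. apply (H1 _ (H2 _ HB)). Qed.


Lemma small_inv eps : 0 < eps -> exists N : nat, / (INR N + 1) < eps.
Proof.
  intros H. destruct (archimed_cor1 eps H) as [N [HN HN0]].
  exists N. apply Rle_lt_trans with (/ INR N); auto.
  apply Rinv_le_contravar. apply lt_0_INR; lia. lra.
Qed.

Lemma inv_pos (N : nat) : 0 < / (INR N + 1).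
Proof. apply Rinv_0_lt_compat. pose proof (pos_INR N). lra. Qed.

Lemma inv_le (N M : nat) : (N <= M)%nat -> / (INR M + 1) <= / (INR N + 1).
Proof.
  intros H. apply Rinv_le_contravar. pose proof (pos_INR N); lra.
  apply le_INR in H. lra.
Qed.


(** * Cantor space facts *)
Definition nbh (p : cantor) (L : nat) : cantor -> Prop :=
  fun y => forall i, (i < L)%nat -> y i = p i.

Lemma cantor_TopAx : TopAx cantor_open.
Proof.
  split; [|split].
  - intros U V HU HV x [Hu Hv]. destruct (HU x Hu) as [N1 H1]. destruct (HV x Hv) as [N2 H2].
    exists (max N1 N2). intros y Hy. split; [apply H1|apply H2]; intros i Hi; apply Hy; lia.
  - intros F HF x [U [HFU HU]]. destruct (HF U HFU x HU) as [N H]. exists N.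
    intros y Hy. exists U; auto.
  - intros x _. exists 0%nat. auto.
Qed.

Lemma nbh_open p L : cantor_open (nbh p L).
Proof.
  intros x Hx. exists L. intros y Hy i Hi. rewrite Hy; auto.
Qed.

Lemma cantor_BCT : BCT cantor_open.
Proof.
  intros M U [F [HF HM]] HU [x0 Hx0].
  destruct (HU x0 Hx0) as [L0 HL0].
  set (P := fun (k : nat) (pl : cantor * nat) (pl' : cantor * nat) =>
     (S k <= snd pl')%nat /\ (forall y, nbh (fst pl') (snd pl') y -> nbh (fst pl) (snd pl) y /\ ~ F k y)).
  assert (Hstep : forall k pl, exists pl', P k pl pl').
  { intros k [p L]. simpl.
    destruct (HF k (nbh p L) (nbh_open p L)) as (V & HV & [v Hv] & HVs & HVF).
    { exists p. intros i Hi; auto. }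
    destruct (HV v Hv) as [Nv HNv].
    exists (v, max (max Nv L) (S k)). unfold P; simpl. split. lia.
    intros y Hy. assert (Vy : V y). { apply HNv. intros i Hi. apply Hy. lia. }
    split; [intros i Hi; rewrite Hy by lia; apply (HVs v Hv); auto | apply HVF; auto]. }
  set (step := fun k pl => epsilon (inhabits pl) (P k pl)).
  set (ps := fix ps (k : nat) : cantor * nat :=
         match k with 0%nat => (x0, L0) | S k => step k (ps k) end).
  assert (Hps : forall k, P k (ps k) (ps (S k))).
  { intros k. apply (epsilon_spec (inhabits (ps k)) (P k (ps k))). apply Hstep. }
  assert (Hnest : forall k m y, (k <= m)%nat -> nbh (fst (ps m)) (snd (ps m)) y ->
                    nbh (fst (ps k)) (snd (ps k)) y).
  { intros k m y Hkm. induction Hkm; auto. intros Hy. apply IHHkm. apply (Hps m); auto. }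
  set (x := fun i => fst (ps (S i)) i).
  assert (Hx : forall k, nbh (fst (ps k)) (snd (ps k)) x).
  { intros k i Hi. unfold x.
    destruct (le_lt_dec k (S i)) as [Hk|Hk].
    - apply (Hnest k (S i)); auto. intros i' _; auto.
    - symmetry. destruct (Hps i) as [Hl _]. apply (Hnest (S i) k); [lia| |lia]. intros i' _; auto. }
  exists x. split.
  - apply HL0. apply (Hx 0%nat).
  - intros HMx. destruct (HM x HMx) as [k Hk]. destruct (Hps k) as [_ H]. apply (H x (Hx (S k))); auto.
Qed.

Definition flip (n : nat) (x : cantor) : cantor :=
  fun i => if Nat.eqb i n then negb (x i) else x i.

Lemma flip_flip n x : flip n (flip n x) = x.
Proof.
  apply functional_extensionality. intros i. unfold flip.
  destruct (Nat.eqb i n); auto. apply Bool.negb_involutive.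
Qed.

Lemma flip_cont n U : cantor_open U -> cantor_open (fun x => U (flip n x)).
Proof.
  intros HU x Hx. destruct (HU _ Hx) as [N HN]. exists (max N (S n)).
  intros y Hy. apply HN. intros i Hi. unfold flip.
  destruct (Nat.eqb i n); rewrite Hy; auto; lia.
Qed.

Lemma flip_Borel n : Borel_map cantor_open cantor_open (flip n).
Proof. apply cont_Borel_map. intros; apply flip_cont; auto. Qed.

Lemma flip_nwd n F : nwd cantor_open F -> nwd cantor_open (fun x => F (flip n x)).
Proof.
  intros HF U HU [u Hu].
  destruct (HF (fun x => U (flip n x)) (flip_cont n U HU)) as (V & HV & [v Hv] & HVs & HVF).
  { exists (flip n u). rewrite flip_flip. auto. }
  exists (fun x => V (flip n x)). repeat split.
  - apply flip_cont; auto.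
  - exists (flip n v). rewrite flip_flip; auto.
  - intros x Hx. rewrite <- (flip_flip n x). apply HVs; auto.
  - intros x Hx. apply HVF; auto.
Qed.

Lemma flip_meager n M : meager cantor_open M -> meager cantor_open (fun x => M (flip n x)).
Proof.
  intros [F [HF HM]]. exists (fun k x => F k (flip n x)). split.
  - intros k; apply flip_nwd; auto.
  - intros x Hx. apply HM; auto.
Qed.

Definition pre (l : list bool) (x : cantor) : Prop :=
  forall i, (i < length l)%nat -> x i = nth i l false.

Lemma pre_open l : cantor_open (pre l).
Proof.
  intros x Hx. exists (length l). intros y Hy i Hi. rewrite Hy; auto.
Qed.

Lemma pre_app l w x : pre (l ++ w) x -> pre l x.
Proof.
  intros H i Hi. rewrite H. rewrite app_nth1; auto. rewrite length_app. lia.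
Qed.

Lemma pre_nonempty l : exists x, pre l x.
Proof. exists (fun i => nth i l false). intros i Hi; auto. Qed.

Section Metric.
Context {X : Type} (O : (X -> Prop) -> Prop) (d : X -> X -> R)
  (d_pos : forall x y, 0 <= d x y)
  (d_zero : forall x y, d x y = 0 <-> x = y)
  (d_sym : forall x y, d x y = d y x)
  (d_tri : forall x y z, d x z <= d x y + d y z)
  (d_open : forall U : X -> Prop,
        O U <-> (forall x, U x -> exists eps, 0 < eps /\
                   forall y, d x y < eps -> U y))
  (d_compl : forall s : nat -> X,
        (forall eps, 0 < eps -> exists N, forall m n,
            (N <= m)%nat -> (N <= n)%nat -> d (s m) (s n) < eps) ->
        exists l, forall eps, 0 < eps -> exists N, forall n,
            (N <= n)%nat -> d (s n) l < eps)
  (Dn : nat -> X) (d_dense : forall x eps, 0 < eps -> exists n, d x (Dn n) < eps).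

Lemma d_refl x : d x x = 0.
Proof. apply d_zero; auto. Qed.

Lemma M_TopAx : TopAx O.
Proof.
  split; [|split].
  - intros U V HU HV. apply (proj2 (d_open _)). intros x [Hu Hv].
    destruct (proj1 (d_open U) HU x Hu) as [e1 [He1 H1]].
    destruct (proj1 (d_open V) HV x Hv) as [e2 [He2 H2]].
    exists (Rmin e1 e2). split. apply Rmin_pos; auto.
    intros y Hy. split; [apply H1|apply H2]; eapply Rlt_le_trans; eauto;
      [apply Rmin_l|apply Rmin_r].
  - intros F HF. apply (proj2 (d_open _)). intros x [U [HFU HU]].
    destruct (proj1 (d_open U) (HF U HFU) x HU) as [e [He H]].
    exists e; split; auto. intros y Hy. exists U; auto.
  - apply (proj2 (d_open _)). intros x _. exists 1; split; auto; lra.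
Qed.

Lemma ball_open c r : O (fun y => d c y < r).
Proof.
  apply (proj2 (d_open _)). intros x Hx. exists (r - d c x). split. lra.
  intros y Hy. pose proof (d_tri c x y). lra.
Qed.

Lemma open_ball U x : O U -> U x -> exists eps, 0 < eps /\ forall y, d x y < eps -> U y.
Proof. intros HU Hx. apply (proj1 (d_open U)); auto. Qed.

Lemma M_BCT : BCT O.
Proof.
  intros M U [F [HF HM]] HU [x0 Hx0].
  destruct (open_ball U x0 HU Hx0) as [e0 [He0 H0]].
  set (P := fun (k : nat) (cr : X * R) (cr' : X * R) =>
              0 < snd cr' /\ snd cr' <= / (INR k + 1) /\
              forall y, d (fst cr') y < 2 * snd cr' -> d (fst cr) y < snd cr /\ ~ F k y).
  assert (Hstep : forall k cr, 0 < snd cr -> exists cr', P k cr cr').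
  { intros k [c r] Hr. simpl in Hr.
    destruct (HF k (fun y => d c y < r) (ball_open c r)) as (V & HV & [v Hv] & HVs & HVF).
    { exists c. rewrite d_refl. auto. }
    destruct (open_ball V v HV Hv) as [e [He Hb]].
    exists (v, Rmin (e / 2) (/ (INR k + 1))). unfold P; simpl.
    pose proof (inv_pos k).
    split; [|split; [|intros y Hy; split]].
    - apply Rmin_pos; lra.
    - apply Rmin_r.
    - apply HVs, Hb. pose proof (Rmin_l (e/2) (/ (INR k + 1))). lra.
    - apply HVF, Hb. pose proof (Rmin_l (e/2) (/ (INR k + 1))). lra. }
  set (step := fun k cr => epsilon (inhabits cr) (P k cr)).
  set (cs := fix cs (k : nat) : X * R :=
         match k with 0%nat => (x0, e0 / 2) | S k => step k (cs k) end).
  assert (Hcs : forall k, 0 < snd (cs k) /\ P k (cs k) (cs (S k))).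
  { induction k.
    - assert (0 < snd (cs 0%nat)) by (simpl; lra). split; auto.
      simpl (cs 1%nat). apply epsilon_spec. apply Hstep; auto.
    - destruct IHk as [_ [Hp _]]. split; auto.
      change (cs (S (S k))) with (step (S k) (cs (S k))).
      apply epsilon_spec. apply Hstep; auto. }
  assert (Hnest : forall k m y, (k <= m)%nat -> d (fst (cs m)) y < snd (cs m) ->
                    d (fst (cs k)) y < snd (cs k)).
  { intros k m y Hkm. induction Hkm; auto. intros Hy. apply IHHkm.
    destruct (Hcs m) as [_ [Hp [_ Hb]]]. apply Hb. lra. }
  assert (Hin : forall k m, (k <= m)%nat -> d (fst (cs k)) (fst (cs m)) < snd (cs k)).
  { intros k m Hkm. apply Hnest with m; auto. rewrite d_refl. apply Hcs. }
  assert (Hrad : forall k, snd (cs (S k)) <= / (INR k + 1)).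
  { intros k. apply Hcs. }
  destruct (d_compl (fun k => fst (cs k))) as [l Hl].
  { intros eps Heps. destruct (small_inv (eps / 2)) as [N HN]. lra.
    exists (S N). intros m n Hm Hn.
    pose proof (Hin (S N) m Hm) as A1. pose proof (Hin (S N) n Hn) as A2.
    pose proof (d_tri (fst (cs m)) (fst (cs (S N))) (fst (cs n))) as A3.
    rewrite (d_sym (fst (cs m)) (fst (cs (S N)))) in A3. pose proof (Hrad N). lra. }
  assert (Hl2 : forall k, d (fst (cs (S k))) l < 2 * snd (cs (S k))).
  { intros k. destruct (Hl (snd (cs (S k)))) as [N HN]. apply Hcs.
    pose proof (HN (max N (S k)) (Nat.le_max_l _ _)).
    pose proof (Hin (S k) (max N (S k)) (Nat.le_max_r _ _)).
    pose proof (d_tri (fst (cs (S k))) (fst (cs (max N (S k)))) l). lra. }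
  exists l. split.
  - apply H0. destruct (Hcs 0%nat) as [_ [_ [_ Hb]]].
    destruct (Hb l (Hl2 0%nat)) as [Hd _]. simpl in Hd. simpl. lra.
  - intros HMl. destruct (HM l HMl) as [k Hk].
    destruct (Hcs k) as [_ [_ [_ Hb]]]. destruct (Hb l (Hl2 k)) as [_ Hn]. auto.
Qed.

Definition bb (q : nat) : X -> Prop :=
  fun y => d (Dn (fst (Cantor.of_nat q))) y < / (INR (snd (Cantor.of_nat q)) + 1).
Definition brad (q : nat) : R := / (INR (snd (Cantor.of_nat q)) + 1).

Lemma bb_open q : O (bb q).
Proof. apply ball_open. Qed.

Lemma bb_small x eps : 0 < eps -> exists q, bb q x /\ brad q < eps /\
   forall y, bb q y -> d x y < eps.
Proof.
  intros He. destruct (small_inv (eps / 2)) as [m Hm]. lra.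
  pose proof (inv_pos m).
  destruct (d_dense x (/ (INR m + 1))) as [i Hi]. auto.
  exists (Cantor.to_nat (i, m)). unfold bb, brad. rewrite Cantor.cancel_of_to. simpl.
  repeat split.
  - rewrite d_sym; auto.
  - lra.
  - intros y Hy. pose proof (d_tri x (Dn i) y). lra.
Qed.

Lemma bb_in x eps : 0 < eps -> exists q, bb q x /\ brad q < eps /\
   forall y, bb q y -> d x y < 2 * brad q.
Proof.
  intros He. destruct (small_inv eps) as [m Hm]; auto.
  pose proof (inv_pos m).
  destruct (d_dense x (/ (INR m + 1))) as [i Hi]. auto.
  exists (Cantor.to_nat (i, m)). unfold bb, brad. rewrite Cantor.cancel_of_to. simpl.
  repeat split.
  - rewrite d_sym; auto.
  - lra.
  - intros y Hy. pose proof (d_tri x (Dn i) y). lra.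
Qed.

Definition sepq (q1 q2 : nat) : Prop := forall u v, bb q1 u -> bb q2 v -> u <> v.

Lemma sep_exists x y : x <> y -> exists q1 q2, sepq q1 q2 /\ bb q1 x /\ bb q2 y.
Proof.
  intros Hxy. assert (Hd : 0 < d x y).
  { destruct (d_pos x y); auto. exfalso. apply Hxy, d_zero. auto. }
  destruct (small_inv (d x y / 4)) as [m Hm]. lra.
  pose proof (inv_pos m).
  destruct (d_dense x (/ (INR m + 1))) as [i Hi]. auto.
  destruct (d_dense y (/ (INR m + 1))) as [i' Hi']. auto.
  exists (Cantor.to_nat (i, m)), (Cantor.to_nat (i', m)).
  unfold sepq, bb. rewrite !Cantor.cancel_of_to. simpl.
  repeat split.
  - intros u v Hu Hv ->. pose proof (d_tri x (Dn i) v) as T1. pose proof (d_tri x v y) as T2.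
    pose proof (d_tri v (Dn i') y) as T3. rewrite (d_sym v (Dn i')) in T3.
    rewrite (d_sym (Dn i') y) in T3. lra.
  - rewrite d_sym; auto.
  - rewrite d_sym; auto.
Qed.

Lemma eqset_Borel {Y : Type} (OY : (Y -> Prop) -> Prop) (HY : TopAx OY)
  (Dom : Y -> Prop) (p q : Y -> X) :
  Borel OY Dom ->
  (forall V, O V -> Borel OY (fun y => Dom y /\ V (p y))) ->
  (forall V, O V -> Borel OY (fun y => V (q y))) ->
  Borel OY (fun y => Dom y /\ p y = q y).
Proof.
  intros HD Hp Hq.
  apply Borel_ext with (fun y => Dom y /\ ~ exists n,
     (fun k y => let pr := Cantor.of_nat k in
        sepq (fst pr) (snd pr) /\ (Dom y /\ bb (fst pr) (p y)) /\ bb (snd pr) (q y)) n y).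
  - intros y; split.
    + intros [H1 H2]; split; auto. apply NNPP; intros Hne.
      destruct (sep_exists _ _ Hne) as (q1 & q2 & Hs & H3 & H4). apply H2.
      exists (Cantor.to_nat (q1, q2)). cbv beta zeta. rewrite Cantor.cancel_of_to; simpl. auto.
    + intros [H1 H2]; split; auto. intros [n (Hs & [_ H3] & H4)]. apply (Hs _ _ H3 H4). auto.
  - apply Borel_inter; auto. apply Borel_compl, Borel_union. intros n. simpl.
    apply Borel_inter; auto. apply Borel_const; auto. apply Borel_inter; auto.
    apply Hp, bb_open. apply Hq, bb_open.
Qed.

Lemma cont_comeager {Y : Type} (OY : (Y -> Prop) -> Prop) (HY : TopAx OY)
  (h : Y -> X) : Borel_map OY O h ->
  exists C, meager OY (fun y => ~ C y) /\
    forall y eps, C y -> 0 < eps -> exists U, OY U /\ U y /\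
       forall z, C z -> U z -> d (h y) (h z) < eps.
Proof.
  intros Hh.
  assert (Hc : forall q, {U | OY U /\ meager OY (fun y => ~ (bb q (h y) <-> U y))}).
  { intros q. apply constructive_indefinite_description.
    apply Borel_BP; auto. apply Hh. apply Borel_open, bb_open. }
  exists (fun y => ~ exists q, ~ (bb q (h y) <-> proj1_sig (Hc q) y)). split.
  - eapply meager_sub. apply meager_union. intros q. apply (proj2 (proj2_sig (Hc q))).
    intros y Hy. apply NNPP in Hy. auto.
  - intros y eps Hy He.
    destruct (bb_small (h y) eps He) as (q & Hq1 & _ & Hq3).
    exists (proj1_sig (Hc q)). split. apply (proj1 (proj2_sig (Hc q))).
    assert (Hiff : forall z, ~ (exists q, ~ (bb q (h z) <-> proj1_sig (Hc q) z)) ->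
                     (bb q (h z) <-> proj1_sig (Hc q) z)).
    { intros z Hz. apply NNPP. intros Hn. apply Hz. eauto. }
    split.
    + apply Hiff; auto.
    + intros z Hz HU. apply Hq3. apply Hiff; auto.
Qed.


Definition pmap (D : X -> Prop) (g : X -> X) : Prop :=
  O D /\ (forall V, O V -> O (fun x => D x /\ V (g x))) /\
  (forall U, O U -> O (fun y => exists x, D x /\ U x /\ g x = y)).

Lemma nwd_preimage D g F : pmap D g -> nwd O F -> nwd O (fun x => D x /\ F (g x)).
Proof.
  intros (HD & Hc & Ho) HF U HU [u Hu].
  pose proof M_TopAx as HT.
  destruct (classic (exists x, U x /\ D x)) as [[x [Hx1 Hx2]]|Hn].
  - set (W := fun x => U x /\ D x).
    assert (HW : O W) by (apply O_inter; auto).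
    destruct (HF (fun y => exists x, D x /\ W x /\ g x = y) (Ho W HW))
      as (V & HV & [v Hv] & HVs & HVF).
    { exists (g x). exists x. repeat split; auto. }
    exists (fun x => W x /\ (D x /\ V (g x))). repeat split.
    + apply O_inter; auto.
    + destruct (HVs v Hv) as (x' & H1 & H2 & H3). exists x'. subst. repeat split; auto; apply H2.
    + intros y [[Hy _] _]; auto.
    + intros y [_ [_ Hy]] [_ Hf]. apply (HVF _ Hy Hf).
  - exists U. repeat split; eauto. intros y Hy [HDy _]. apply Hn; eauto.
Qed.

Lemma meager_preimage D g M : pmap D g -> meager O M -> meager O (fun x => D x /\ M (g x)).
Proof.
  intros Hp [F [HF HM]]. exists (fun k x => D x /\ F k (g x)). split.
  - intros k. apply nwd_preimage; auto.
  - intros x [Hx1 Hx2]. destruct (HM _ Hx2) as [k Hk]. eauto.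
Qed.

Fixpoint lenc (l : list nat) : nat :=
  match l with nil => 0%nat | a :: l' => S (Cantor.to_nat (a, lenc l')) end.

Lemma lenc_inj l l' : lenc l = lenc l' -> l = l'.
Proof.
  revert l'. induction l as [|a l IH]; intros [|a' l'] H; cbn [lenc] in H; try discriminate; auto.
  assert (H2 : Cantor.to_nat (a, lenc l) = Cantor.to_nat (a', lenc l')) by congruence.
  apply (f_equal Cantor.of_nat) in H2. rewrite !Cantor.cancel_of_to in H2.
  injection H2 as -> H2. f_equal. auto.
Qed.

Definition ldec (n : nat) : list nat := epsilon (inhabits nil) (fun l => lenc l = n).

Lemma ldec_surj l : exists n, ldec n = l.
Proof.
  exists (lenc l). apply lenc_inj. unfold ldec. apply (epsilon_spec (inhabits nil) (fun l0 => lenc l0 = lenc l)). eauto.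
Qed.

Section Image.
Context (D : X -> Prop) (g : X -> X) (Hg : pmap D g) (W G : X -> Prop)
  (HW : O W) (HWD : forall x, W x -> D x) (HG : meager O (fun x => W x /\ ~ G x)).

Lemma image_lemma :
  meager O (fun y => (exists x, W x /\ g x = y) /\ ~ exists x, W x /\ G x /\ g x = y).
Proof.
  pose proof M_TopAx as HT.
  destruct HG as [F [HF HFc]].
  destruct Hg as (HD & Hc & Ho).
  set (Ok := fun k x => exists V, (O V /\ forall y, V y -> ~ F k y) /\ V x).
  assert (HOk : forall k, O (Ok k)) by (intros k; apply O_union; tauto).
  assert (HOkF : forall k x, Ok k x -> ~ F k x).
  { intros k x (V & [_ HV] & Hx). auto. }
  assert (HOkd : forall k U, O U -> (exists x, U x) -> exists x, U x /\ Ok k x).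
  { intros k U HU Hne. destruct (HF k U HU Hne) as (V & HV & [v Hv] & HVU & HVF).
    exists v. split; auto. exists V; auto. }
  set (child := fun (P : X -> Prop) (k a : nat) (y : X) =>
     (k <= snd (Cantor.of_nat a))%nat /\
     (forall z, d (Dn (fst (Cantor.of_nat a))) z < 2 * / (INR (snd (Cantor.of_nat a)) + 1) ->
                P z /\ Ok k z) /\
     d (Dn (fst (Cantor.of_nat a))) y < / (INR (snd (Cantor.of_nat a)) + 1)).
  assert (Hchild_open : forall P k a, O (child P k a)).
  { intros P k a. unfold child.
    destruct (classic ((k <= snd (Cantor.of_nat a))%nat /\
     (forall z, d (Dn (fst (Cantor.of_nat a))) z < 2 * / (INR (snd (Cantor.of_nat a)) + 1) ->
                P z /\ Ok k z))) as [Hy|Hn].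
    - apply (O_ext O _ _ (ball_open (Dn (fst (Cantor.of_nat a))) (/ (INR (snd (Cantor.of_nat a)) + 1)))).
      intros y; tauto.
    - apply (O_ext O _ _ (O_empty O HT)). intros y; tauto. }
  assert (Hchild_sub : forall P k a y, child P k a y -> P y).
  { intros P k a y (_ & H1 & H2). apply H1. pose proof (inv_pos (snd (Cantor.of_nat a))). lra. }
  assert (Hchild_dense : forall P k U, O P -> O U -> (exists x, U x /\ P x) ->
                          exists a y, U y /\ child P k a y).
  { intros P k U HP HU [x0 Hx0].
    assert (HUP : O (fun x => U x /\ P x)) by (apply O_inter; auto).
    destruct (HOkd k (fun x => U x /\ P x) HUP) as [x [[Hx1 Hx2] Hx3]]; [eauto|].
    assert (HO3 : O (fun z => (U z /\ P z) /\ Ok k z)) by (repeat apply O_inter; auto).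
    destruct (open_ball _ x HO3) as [rho [Hrho Hb]]; auto.
    destruct (small_inv (rho / 4)) as [m0 Hm0]. lra.
    set (m := max m0 k).
    pose proof (inv_le m0 m (Nat.le_max_l _ _)). pose proof (inv_pos m).
    destruct (d_dense x (/ (INR m + 1))) as [i Hi]; auto.
    exists (Cantor.to_nat (i, m)), x. split; auto. unfold child.
    rewrite Cantor.cancel_of_to. simpl. split; [apply Nat.le_max_r|split].
    - intros z Hz. destruct (Hb z) as [[_ H1] H2]; auto.
      pose proof (d_tri x (Dn i) z). lra.
    - rewrite d_sym; auto. }
  set (cell := fix cell (P : X -> Prop) (k : nat) (s : list nat) : X -> Prop :=
     match s with nil => P | a :: s' => cell (child P k a) (S k) s' end).
  assert (Hcell_app : forall s P k a, cell P k (s ++ a :: nil) = child (cell P k s) (k + length s)%nat a).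
  { induction s as [|b s IH]; intros P k a; simpl. f_equal; lia.
    rewrite IH. f_equal. lia. }
  assert (Hcell_open : forall s P k, O P -> O (cell P k s)).
  { induction s as [|b s IH]; intros P k HP; simpl; auto. }
  assert (Hcell_sub : forall s P k y, cell P k s y -> P y).
  { induction s as [|b s IH]; intros P k y Hy; simpl in Hy; auto.
    apply (Hchild_sub P k b), (IH _ _ _ Hy). }
  set (C := fun s => cell W 0%nat s).
  assert (HCapp : forall s a, C (s ++ a :: nil) = child (C s) (length s) a).
  { intros s a. unfold C. rewrite Hcell_app. reflexivity. }
  assert (HCW : forall s y, C s y -> W y).
  { intros s y. apply Hcell_sub. }
  assert (HCo : forall s, O (C s)) by (intros s; apply Hcell_open; auto).
  set (img := fun (A : X -> Prop) y => exists x, A x /\ g x = y).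
  assert (Himg_open : forall s, O (img (C s))).
  { intros s. apply (O_ext O _ _ (Ho (C s) (HCo s))).
    intros y; split.
    - intros (x & _ & H1 & H2). exists x; auto.
    - intros (x & H1 & H2). exists x. repeat split; auto. apply HWD, (HCW s), H1. }
  set (Piece := fun s y => img (C s) y /\ ~ exists a, img (C (s ++ a :: nil)) y).
  assert (HPiece : forall s, nwd O (Piece s)).
  { intros s U HU [u Hu].
    destruct (classic (exists y0, U y0 /\ img (C s) y0)) as [[y0 [Hy0 [x0 [Hx0 Hgx0]]]]|Hn].
    - destruct (Hchild_dense (C s) (length s) (fun x => D x /\ U (g x))) as (a & x' & [HDx' HUx'] & Hx');
        auto.
      exists x0; split; auto. split. apply HWD, (HCW s), Hx0. subst; auto.
      rewrite <- HCapp in Hx'.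
      exists (fun y => U y /\ img (C (s ++ a :: nil)) y). repeat split.
      + apply O_inter; auto.
      + exists (g x'). split; auto. exists x'; auto.
      + intros y [Hy _]; auto.
      + intros y [_ Hy] [_ Hn]. apply Hn; eauto.
    - exists U. repeat split; eauto. intros y Hy [Hy' _]. apply Hn; eauto. }
  assert (HN : meager O (fun y => exists s, Piece s y)).
  { apply (meager_union_surj O ldec). apply ldec_surj. intros s; apply nwd_meager; auto. }
  eapply meager_sub; [apply HN|].
  intros y [[x0 [HWx0 Hgx0]] Hno]. apply NNPP. intros Hnp.
  assert (Hnext : forall s, img (C s) y -> exists a, img (C (s ++ a :: nil)) y).
  { intros s Hs. apply NNPP. intros Hn. apply Hnp. exists s. split; auto. }
  set (nx := fun s => s ++ epsilon (inhabits 0%nat) (fun a => img (C (s ++ a :: nil)) y) :: nil).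
  set (ss := fix ss (k : nat) : list nat := match k with 0%nat => nil | S k => nx (ss k) end).
  assert (Hss : forall k, img (C (ss k)) y /\ length (ss k) = k).
  { induction k as [|k [IH1 IH2]].
    - split; auto. exists x0; auto.
    - simpl. unfold nx. split.
      + apply (epsilon_spec (inhabits 0%nat) (fun a => img (C (ss k ++ a :: nil)) y)). auto.
      + rewrite length_app, IH2. simpl. lia. }
  set (aa := fun k => epsilon (inhabits 0%nat) (fun a => img (C (ss k ++ a :: nil)) y)).
  assert (Hssa : forall k, ss (S k) = ss k ++ aa k :: nil) by reflexivity.
  set (cc := fun k => Dn (fst (Cantor.of_nat (aa k)))).
  set (rr := fun k => / (INR (snd (Cantor.of_nat (aa k))) + 1)).
  assert (Hchild_k : forall k z, C (ss (S k)) z ->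
            (k <= snd (Cantor.of_nat (aa k)))%nat /\
            (forall w, d (cc k) w < 2 * rr k -> C (ss k) w /\ Ok k w) /\ d (cc k) z < rr k).
  { intros k z Hz. rewrite Hssa, HCapp in Hz. destruct (Hss k) as [_ Hl].
    rewrite Hl in Hz. exact Hz. }
  assert (Hrr : forall k, rr k <= / (INR k + 1)).
  { intros k. destruct (Hss (S k)) as [[z [Hz _]] _]. destruct (Hchild_k k z Hz) as [Hk _].
    apply inv_le; auto. }
  assert (Hnest : forall k m z, (k <= m)%nat -> C (ss m) z -> C (ss k) z).
  { intros k m z Hkm. induction Hkm; auto. intros Hz. apply IHHkm.
    destruct (Hchild_k m z Hz) as (_ & H1 & H2). apply H1. pose proof (inv_pos (snd (Cantor.of_nat (aa m)))).
    unfold rr in *. lra. }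
  set (xs := fun k => epsilon (inhabits x0) (fun x => C (ss k) x /\ g x = y)).
  assert (Hxs : forall k, C (ss k) (xs k) /\ g (xs k) = y).
  { intros k. apply (epsilon_spec (inhabits x0) (fun x => C (ss k) x /\ g x = y)). apply Hss. }
  assert (Hxin : forall k m, (S k <= m)%nat -> d (cc k) (xs m) < rr k).
  { intros k m Hkm. apply (Hchild_k k). apply (Hnest _ m); auto. apply Hxs. }
  destruct (d_compl xs) as [l Hl].
  { intros eps Heps. destruct (small_inv (eps / 2)) as [N HN']. lra.
    exists (S N). intros m n Hm Hn.
    pose proof (Hxin N m Hm) as A1. pose proof (Hxin N n Hn) as A2.
    pose proof (d_tri (xs m) (cc N) (xs n)) as A3.
    rewrite (d_sym (xs m) (cc N)) in A3. pose proof (Hrr N). lra. }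
  assert (Hl2 : forall k, d (cc k) l < 2 * rr k).
  { intros k. destruct (Hl (rr k)) as [N HN']. apply inv_pos.
    pose proof (HN' (max N (S k)) (Nat.le_max_l _ _)).
    pose proof (Hxin k (max N (S k)) (Nat.le_max_r _ _)).
    pose proof (d_tri (cc k) (xs (max N (S k))) l). lra. }
  assert (HlC : forall k, C (ss k) l /\ Ok k l).
  { intros k. destruct (Hss (S k)) as [[z [Hz _]] _]. destruct (Hchild_k k z Hz) as (_ & H1 & _).
    apply H1, Hl2. }
  assert (HWl : W l) by (apply (HCW (ss 0%nat)), HlC).
  assert (HGl : G l).
  { apply NNPP. intros HnG. destruct (HFc l (conj HWl HnG)) as [k Hk].
    apply (HOkF k l); auto. apply HlC. }
  assert (Hgl : g l = y).
  { apply NNPP. intros Hne. assert (Hd : 0 < d (g l) y).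
    { destruct (d_pos (g l) y); auto. exfalso; apply Hne, d_zero; auto. }
    destruct (open_ball _ l (Hc _ (ball_open (g l) (d (g l) y)))) as [e [He Hb]].
    { split. apply HWD, HWl. simpl. rewrite d_refl; auto. }
    destruct (Hl e He) as [N HN']. destruct (Hb (xs N)) as [_ Hlt].
    rewrite d_sym; apply HN'; auto. destruct (Hxs N) as [_ Hg']. rewrite Hg' in Hlt. lra. }
  apply Hno. exists l. auto.
Qed.

End Image.

Lemma build_levels (t : nat -> list bool) (b : bool) (Htl : forall n, length (t n) = n)
  (Htd : forall u, exists n w, t n = u ++ w) :
  forall K v, exists v' lv, (exists w, v' = v ++ w) /\ length lv = K /\ NoDup lv /\
    (forall n, In n lv -> (length v <= n)%nat /\ exists w, v' = t n ++ b :: w).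
Proof.
  induction K as [|K IH]; intros v.
  - exists v, nil. split; [exists nil; rewrite app_nil_r; auto|split; [auto|split; [constructor|intros n []]]].
  - destruct (Htd v) as [n [w0 Hn]].
    destruct (IH (t n ++ b :: nil)) as (v' & lv & [w Hw] & Hl & Hnd & Hlv).
    assert (Hvn : (length v <= n)%nat).
    { rewrite <- (Htl n), Hn, length_app. lia. }
    exists v', (n :: lv). split; [|split; [|split]].
    + exists (w0 ++ b :: w). rewrite Hw, Hn. rewrite <- !app_assoc. auto.
    + simpl; auto.
    + constructor; auto. intros Hin. destruct (Hlv n Hin) as [Hle _].
      rewrite length_app, Htl in Hle. simpl in Hle. lia.
    + intros m [<-|Hin]; auto.
      * split; auto. exists w. rewrite Hw. rewrite <- app_assoc. auto.
      * destruct (Hlv m Hin) as [Hle Hm]. split; auto.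
        rewrite length_app, Htl in Hle. simpl in Hle. lia.
Qed.

Lemma nth_map_seq0 (p : cantor) L i : (i < L)%nat -> nth i (map p (seq 0 L)) false = p i.
Proof.
  intros H. rewrite nth_indep with (d' := p 0%nat) by (rewrite length_map, length_seq; auto).
  rewrite map_nth, seq_nth; auto.
Qed.

Lemma key_cantor (Df : nat -> X -> Prop) (f : nat -> X -> X)
  (HDf : forall n, O (Df n)) (Hfc : forall n V, O V -> O (fun x => Df n x /\ V (f n x)))
  (Hhyp : forall m n x, (m < n)%nat -> Df n x -> Df m (f n x) -> Df m x ->
     f m (f n x) = f m x)
  (t : nat -> list bool) (b : bool) (Ht0 : t 0%nat = nil) (Htl : forall n, length (t n) = n)
  (Htd : forall u, exists n w, t n = u ++ w)
  (h : cantor -> X) (Hh : Borel_map cantor_open O h) (Hinj : forall x y, h x = h y -> x = y)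
  (Hedge : forall n x, pre (t n ++ b :: nil) x ->
      exists i, Df i (h x) /\ f i (h x) = h (flip n x)) : False.
Proof.
  pose proof M_TopAx as HT. pose proof cantor_TopAx as HC.
  set (E := fun j (x : cantor) => (x 0%nat = b /\ Df j (h x)) /\ f j (h x) = h (flip 0 x)).
  assert (Hb0 : cantor_open (fun x : cantor => x 0%nat = b)).
  { intros x Hx. exists 1%nat. intros y Hy. rewrite Hy; auto. }
  assert (HEB : forall j, Borel cantor_open (E j)).
  { intros j. apply (eqset_Borel cantor_open HC).
    - apply Borel_inter; auto. apply Borel_open; auto.
      apply (Hh (Df j)). apply Borel_open; auto.
    - intros V HV. apply Borel_ext with (fun y : cantor => y 0%nat = b /\
         (fun z => Df j z /\ V (f j z)) (h y)).
      + intros y; simpl; tauto.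
      + apply Borel_inter; auto. apply Borel_open; auto. apply (Hh (fun z => Df j z /\ V (f j z))), Borel_open; auto.
    - intros V HV. apply (Borel_map_comp _ cantor_open O _ _ (flip_Borel 0) Hh).
      apply Borel_open; auto. }
  destruct (cover_lemma cantor_open HC (fun x => x 0%nat = b) E cantor_BCT Hb0)
    as (j & W & HW & [p Hp] & HWW0 & HM).
  { exists (fun _ => b). auto. }
  { intros n. apply Borel_BP; auto. }
  { intros x Hx. destruct (Hedge 0%nat x) as [i [Hi1 Hi2]].
    { rewrite Ht0. intros i Hi. simpl in Hi. destruct i; [|lia]. simpl. auto. }
    exists i. unfold E. auto. }
  destruct (HW p Hp) as [NW HNW].
  set (L := max NW 1).
  set (v0 := map p (seq 0 L)).
  destruct (build_levels t b Htl Htd (S (S j)) v0) as (v' & lv & [w Hw] & Hlen & Hnd & Hlv).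
  assert (HMM : meager cantor_open (fun x => (W x /\ ~ E j x) \/
                   exists n, W (flip n x) /\ ~ E j (flip n x))).
  { apply meager_union2. auto. apply meager_union. intros n. apply (flip_meager n (fun x => W x /\ ~ E j x)). auto. }
  destruct (cantor_BCT _ _ HMM (pre_open v') (pre_nonempty v')) as [x [Hxv HxM]].
  assert (Hx0 : pre v0 x) by (subst v'; eapply pre_app; eauto).
  assert (HxL : forall i, (i < L)%nat -> x i = p i).
  { intros i Hi. rewrite Hx0. apply nth_map_seq0; auto. unfold v0. rewrite length_map, length_seq. auto. }
  assert (HWx : W x) by (apply HNW; intros i Hi; apply HxL; lia).
  assert (HEx : E j x) by (apply NNPP; intros Hn; apply HxM; left; auto).
  assert (Hlev : forall n, In n lv -> (L <= n)%nat /\ pre (t n ++ b :: nil) x /\ E j (flip n x)).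
  { intros n Hin. destruct (Hlv n Hin) as [Hle [w' Hw']].
    unfold v0 in Hle. rewrite length_map, length_seq in Hle.
    split; auto. split.
    - apply pre_app with w'. rewrite <- app_assoc. simpl. rewrite <- Hw'. auto.
    - apply NNPP. intros Hn. apply HxM. right. exists n. split; auto.
      apply HNW. intros i Hi. unfold flip. destruct (Nat.eqb_spec i n). lia. apply HxL. lia. }
  set (I := fun n => epsilon (inhabits 0%nat) (fun i => Df i (h x) /\ f i (h x) = h (flip n x))).
  assert (HI : forall n, In n lv -> Df (I n) (h x) /\ f (I n) (h x) = h (flip n x)).
  { intros n Hin. apply (epsilon_spec (inhabits 0%nat) (fun i => Df i (h x) /\ f i (h x) = h (flip n x))).
    apply Hedge. apply Hlev; auto. }
  assert (Hflip_ne : forall n1 n2, flip n1 x = flip n2 x -> n1 = n2).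
  { intros n1 n2 H. destruct (Nat.eq_dec n1 n2); auto. exfalso.
    apply (f_equal (fun z => z n1)) in H. unfold flip in H.
    rewrite Nat.eqb_refl in H. destruct (Nat.eqb_spec n1 n2); [contradiction|].
    destruct (x n1); discriminate. }
  assert (Hbig : exists n, In n lv /\ (j < I n)%nat).
  { apply NNPP. intros Hn.
    assert (Hnd2 : NoDup (map I lv)).
    { apply NoDup_map_NoDup_ForallPairs; auto. intros a c Ha Hc HIac.
      apply Hflip_ne, Hinj. destruct (HI a Ha) as [_ <-]. destruct (HI c Hc) as [_ <-].
      rewrite HIac; auto. }
    assert (Hincl : incl (map I lv) (seq 0 (S j))).
    { intros i Hi. apply in_map_iff in Hi. destruct Hi as [n [<- Hin]].
      apply in_seq. split. lia. destruct (le_lt_dec (I n) j); [lia|].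
      exfalso; apply Hn; eauto. }
    pose proof (NoDup_incl_length Hnd2 Hincl). rewrite length_map, length_seq in H. lia. }
  destruct Hbig as [n [Hin Hjn]].
  destruct (HI n Hin) as [HD1 Hfi]. destruct (Hlev n Hin) as (HLn & _ & HEn).
  destruct HEx as [[_ HDj] Hfj]. destruct HEn as [[_ HDj'] Hfj'].
  assert (Heq := Hhyp j (I n) (h x) Hjn HD1 ltac:(rewrite Hfi; auto) HDj).
  rewrite Hfi, Hfj', Hfj in Heq. apply Hinj in Heq.
  apply (f_equal (fun z => z n)) in Heq. unfold flip in Heq.
  assert (Hn0 : Nat.eqb n 0 = false) by (apply Nat.eqb_neq; lia).
  rewrite Hn0, Nat.eqb_refl in Heq. destruct (x n); discriminate.
Qed.

Lemma finite_min (P : nat -> Prop) (r : nat -> R) : (forall i, P i -> 0 < r i) ->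
  forall j, exists rho, 0 < rho /\ forall i, (i <= j)%nat -> P i -> rho <= r i.
Proof.
  intros Hr. induction j as [|j [rho [Hrho H]]].
  - destruct (classic (P 0%nat)) as [H0|H0].
    + exists (r 0%nat). split; auto. intros i Hi Pi. assert (i = 0%nat) by lia. subst. lra.
    + exists 1. split. lra. intros i Hi Pi. assert (i = 0%nat) by lia. subst. contradiction.
  - destruct (classic (P (S j))) as [H0|H0].
    + exists (Rmin rho (r (S j))). split. apply Rmin_pos; auto.
      intros i Hi Pi. destruct (Nat.eq_dec i (S j)) as [->|Hne].
      * apply Rmin_r.
      * eapply Rle_trans. apply Rmin_l. apply H; auto. lia.
    + exists rho. split; auto. intros i Hi Pi. destruct (Nat.eq_dec i (S j)) as [->|Hne].
      contradiction. apply H; auto. lia.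
Qed.

Lemma key_X (Df : nat -> X -> Prop) (f : nat -> X -> X)
  (HDf : forall n, O (Df n)) (Hfc : forall n V, O V -> O (fun x => Df n x /\ V (f n x)))
  (Hfo : forall n U, O U -> O (fun y => exists x, Df n x /\ U x /\ f n x = y))
  (Hfix : forall n x, Df n x -> f n x <> x)
  (Hclos : forall x, closure2 O (graph_union Df f) x x)
  (Hhyp : forall m n x, (m < n)%nat -> Df n x -> Df m (f n x) -> Df m x ->
     f m (f n x) = f m x)
  (x0 : X)
  (h : X -> X) (Hh : Borel_map O O h) (Hinj : forall x y, h x = h y -> x = y)
  (Hrev : forall u v, graph_union Df f u v -> graph_union Df f (h v) (h u)) : False.
Proof.
  pose proof M_TopAx as HT.
  assert (Hpm : forall n, pmap (Df n) (f n)) by (intros n; split; auto).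
  destruct (Hclos x0 (fun _ => True) (fun _ => True) (O_full O HT) (O_full O HT) I I)
    as (a0 & a1 & _ & _ & [b [Hb0 _]]).
  set (E := fun j z => (Df b z /\ Df j (h (f b z))) /\ f j (h (f b z)) = h z).
  assert (HEB : forall j, Borel O (E j)).
  { intros j. apply (eqset_Borel O HT).
    - apply (partial_preimage_Borel O O HT (Df b) (f b) (HDf b) (Hfc b) (fun y => Df j (h y))).
      apply (Hh (Df j)). apply Borel_open; auto.
    - intros V HV.
      apply Borel_ext with (fun y => Df b y /\ (fun w => Df j (h w) /\ V (f j (h w))) (f b y)).
      + intros y; simpl; tauto.
      + apply (partial_preimage_Borel O O HT (Df b) (f b) (HDf b) (Hfc b) (fun w => Df j (h w) /\ V (f j (h w)))).
        apply (Hh (fun z => Df j z /\ V (f j z))). apply Borel_open; auto.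
    - intros V HV. apply (Hh V). apply Borel_open; auto. }
  destruct (cover_lemma O HT (Df b) E M_BCT (HDf b)) as (j & W & HW & [w0 Hw0] & HWD & HM).
  { eauto. }
  { intros n. apply Borel_BP; auto. }
  { intros z Hz. destruct (Hrev z (f b z)) as [j [Hj1 Hj2]]. exists b; auto.
    exists j. unfold E. auto. }
  destruct (cont_comeager O HT h Hh) as (C & HCm & HCc).
  set (G := fun z => E j z /\ C (f b z)).
  assert (HMG : meager O (fun z => W z /\ ~ G z)).
  { eapply meager_sub. apply meager_union2. apply HM.
    apply (meager_preimage (Df b) (f b) (fun y => ~ C y) (Hpm b) HCm).
    intros z [Hz HnG]. destruct (classic (E j z)) as [HE|HE].
    - right. split; auto. intros HC. apply HnG. split; auto.
    - left. auto. }
  set (Vimg := fun y => exists x, W x /\ f b x = y).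
  set (Yimg := fun y => exists x, W x /\ G x /\ f b x = y).
  assert (HVimg : O Vimg).
  { apply (O_ext O _ _ (Hfo b W HW)). intros y; split.
    - intros (x & _ & H1 & H2). exists x; auto.
    - intros (x & H1 & H2). exists x; auto. }
  assert (HVY : meager O (fun y => Vimg y /\ ~ Yimg y)).
  { apply (image_lemma (Df b) (f b) (Hpm b) W G HW HWD HMG). }
  set (W' := fun c q y => Vimg y /\ bb q y /\ Df c y).
  assert (HW' : forall c q, O (W' c q)).
  { intros c q. apply O_inter; auto. apply O_inter; auto. apply bb_open. }
  set (G' := fun y => Yimg y /\ C y).
  set (T := fun k c q x => brad q <= / (INR k + 1) /\ bb q x /\ exists y, W' c q y /\ f c y = x).
  set (Ok := fun k x => exists c q, T k c q x).
  set (Nk := fun k x => exists c q, T k c q x /\ ~ exists y, (W' c q y /\ G' y) /\ f c y = x).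
  assert (HNk : forall k, meager O (Nk k)).
  { intros k. apply meager_union. intros c. apply meager_union. intros q.
    eapply meager_sub.
    apply (image_lemma (Df c) (f c) (Hpm c) (W' c q) G' (HW' c q)).
    - intros y [_ [_ Hy]]; auto.
    - eapply meager_sub. apply (meager_union2 _ _ _ HVY HCm).
      intros y [[Hy1 _] Hy2]. destruct (classic (Yimg y)); [right|left; auto].
      intros HC. apply Hy2. split; auto.
    - intros x [(_ & _ & y & Hy & Hfy) Hn]. split. exists y; auto.
      intros (y' & Hy' & HG' & Hfy'). apply Hn. exists y'. auto. }
  assert (HOk : forall k, nwd O (fun x => Vimg x /\ ~ Ok k x)).
  { intros k U HU [u Hu].
    destruct (classic (exists y0, U y0 /\ Vimg y0)) as [[y0 [Hy0U Hy0V]]|Hn].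
    - assert (HUV : O (fun y => U y /\ Vimg y)) by (apply O_inter; auto).
      destruct (open_ball _ y0 HUV) as [rho [Hrho Hb]]. split; auto.
      destruct (bb_in y0 (Rmin (rho / 2) (/ (INR k + 1)))) as (q & Hq1 & Hq2 & Hq3).
      { apply Rmin_pos. lra. apply inv_pos. }
      pose proof (Rmin_l (rho / 2) (/ (INR k + 1))). pose proof (Rmin_r (rho / 2) (/ (INR k + 1))).
      assert (Hqs : forall y, bb q y -> U y /\ Vimg y).
      { intros y Hy. apply Hb. pose proof (Hq3 y Hy). lra. }
      destruct (Hclos y0 (bb q) (bb q) (bb_open q) (bb_open q) Hq1 Hq1)
        as (a & a' & Ha & Ha' & [c [Hca Hfa]]).
      exists (fun x => U x /\ Ok k x). repeat split.
      + apply O_inter; auto. unfold Ok.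
        apply (O_unionN O HT (fun c' x => exists q, T k c' q x)); intros c'.
        apply (O_unionN O HT (fun q' x => T k c' q' x)); intros q'. unfold T.
        destruct (classic (brad q' <= / (INR k + 1))) as [Hr|Hr].
        * apply (O_ext O _ _ (O_inter O HT _ _ (bb_open q') (Hfo c' (W' c' q') (HW' c' q')))).
          intros x; split.
          -- intros [H1 (y & H2 & H3 & H4)]. split; auto. split; auto. exists y. auto.
          -- intros (_ & H1 & y & H2 & H3). split; auto. exists y. split; auto. apply H2.
        * apply (O_ext O _ _ (O_empty O HT)). intros x; split; [tauto|]. intros [Hc0 _]; auto.
      + exists a'. split. apply Hqs; auto. exists c, q. split. lra. split; auto.
        exists a. split; auto. split. apply Hqs; auto. split; auto.
      + intros x [Hx _]; auto.
      + intros x [_ Hx] [_ Hx']. auto.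
    - exists U. repeat split; eauto. intros y Hy [Hy' _]. apply Hn; eauto. }
  assert (HBad : meager O (fun x => (Vimg x /\ ~ Yimg x) \/ ~ C x \/
                    exists k, (Vimg x /\ ~ Ok k x) \/ Nk k x)).
  { apply meager_union2; auto. apply meager_union2; auto. apply meager_union.
    intros k. apply meager_union2; auto. apply nwd_meager; auto. }
  destruct (M_BCT _ _ HBad HVimg) as [x' [Hx'V Hx'B]].
  { exists (f b w0). exists w0; auto. }
  assert (Hx'Y : Yimg x') by (apply NNPP; intros Hn; apply Hx'B; left; auto).
  assert (Hx'C : C x') by (apply NNPP; intros Hn; apply Hx'B; right; left; auto).
  assert (Hx'k : forall k, Ok k x' /\ ~ Nk k x').
  { intros k. split.
    - apply NNPP; intros Hn; apply Hx'B; right; right; exists k; left; split; auto.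
    - intros Hn; apply Hx'B; right; right; exists k; right; auto. }
  destruct Hx'Y as (z' & Hz'W & [HEz' HCz'] & Hfz').
  destruct HEz' as [[_ HDjx] Hfjx]. rewrite Hfz' in HDjx, Hfjx.
  destruct (finite_min (fun i => Df i (h x')) (fun i => d (h x') (f i (h x')))) with j
    as [rho [Hrho Hrho2]].
  { intros i Hi. destruct (d_pos (h x') (f i (h x'))) as [Hp|Hp]; auto.
    exfalso. apply (Hfix i (h x') Hi). symmetry. apply d_zero. auto. }
  destruct (HCc x' rho Hx'C Hrho) as (U & HU & HUx & HUc).
  destruct (open_ball U x' HU HUx) as [delta [Hdelta Hdb]].
  destruct (small_inv (delta / 2)) as [k Hk]. lra.
  destruct (Hx'k k) as [[c [q HTq]] HnN].
  assert (Hy : exists y, (W' c q y /\ G' y) /\ f c y = x').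
  { apply NNPP. intros Hn. apply HnN. exists c, q. split; auto. }
  destruct HTq as (Hbr & Hbq & _).
  destruct Hy as (y & [(HyV & Hyq & HyDc) [HyY HyC]] & Hfy).
  assert (Hdxy : d x' y < delta).
  { unfold bb, brad in *. pose proof (d_tri x' (Dn (fst (Cantor.of_nat q))) y).
    rewrite (d_sym x' (Dn _)) in H. lra. }
  assert (Hhxy : d (h x') (h y) < rho) by (apply HUc; auto).
  destruct HyY as (w & HwW & [HEw HCw] & Hfw).
  destruct (Hrev y x') as [i [Hi1 Hi2]]. { exists c; auto. }
  assert (Hji : (j < i)%nat).
  { destruct (le_lt_dec i j) as [Hle|]; auto. exfalso.
    pose proof (Hrho2 i Hle Hi1). rewrite Hi2 in H. lra. }
  destruct HEw as [[_ HDjw] Hfjw]. rewrite Hfw in HDjw, Hfjw.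
  assert (Heq := Hhyp j i (h x') Hji Hi1 ltac:(rewrite Hi2; auto) HDjx).
  rewrite Hi2, Hfjw, Hfjx in Heq. apply Hinj in Heq. subst w.
  rewrite Hfz' in Hfw. subst y. apply (Hfix c x' HyDc Hfy).
Qed.

Lemma triangle (Df : nat -> X -> Prop) (f : nat -> X -> X)
  (HDf : forall n, O (Df n)) (Hfc : forall n V, O V -> O (fun x => Df n x /\ V (f n x)))
  (Hfix : forall n x, Df n x -> f n x <> x)
  (Hclos : forall x, closure2 O (graph_union Df f) x x) (x0 : X) :
  exists m n x, (m < n)%nat /\ Df n x /\ Df m (f n x) /\ Df m x.
Proof.
  pose proof M_TopAx as HT.
  destruct (Hclos x0 (fun _ => True) (fun _ => True) (O_full O HT) (O_full O HT) I I)
    as (a0 & a1 & _ & _ & [m [Hm0 _]]).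
  assert (Hshr : forall K, exists U, O U /\ (exists x, U x) /\ (forall x, U x -> Df m x) /\
                   forall k x, (k < K)%nat -> U x -> Df k x -> ~ U (f k x)).
  { induction K as [|K (U & HU & [u Hu] & HUm & HUk)].
    - exists (Df m). split; auto. split; eauto. split; auto. intros k x Hk; lia.
    - destruct (classic (exists y, U y /\ Df K y)) as [[y [HyU HyK]]|Hn].
      + assert (Hd : 0 < d y (f K y)).
        { destruct (d_pos y (f K y)) as [H|H]; auto. exfalso.
          apply (Hfix K y HyK). symmetry. apply d_zero. auto. }
        exists (fun x => (U x /\ d y x < d y (f K y) / 2) /\
                         (Df K x /\ d (f K y) (f K x) < d y (f K y) / 2)).
        split; [|split; [|split]].
        * apply O_inter; auto. apply O_inter; auto. apply ball_open.
          apply (Hfc K (fun z => d (f K y) z < d y (f K y) / 2)). apply ball_open.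
        * exists y. rewrite !d_refl. repeat split; auto; lra.
        * intros x [[Hx _] _]; auto.
        * intros k x Hk [[HxU Hx1] [HxK Hx2]] HxD [[Hf1 Hf2] [Hf3 Hf4]].
          destruct (Nat.eq_dec k K) as [->|Hne].
          -- pose proof (d_tri y (f K x) (f K y)). rewrite (d_sym (f K x) (f K y)) in H. lra.
          -- apply (HUk k x); auto. lia.
      + exists U. split; auto. split; eauto. split; auto.
        intros k x Hk Hx HD. destruct (Nat.eq_dec k K) as [->|Hne].
        * exfalso; apply Hn; eauto.
        * apply HUk; auto. lia. }
  destruct (Hshr (S m)) as (U & HU & [u Hu] & HUm & HUk).
  destruct (Hclos u U U HU HU Hu Hu) as (a & a' & Ha & Ha' & [n [Hn Hfn]]).
  exists m, n, a. destruct (le_lt_dec n m) as [Hle|Hlt].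
  - exfalso. apply (HUk n a); auto. lia. rewrite Hfn; auto.
  - split; auto. split; auto. split; auto. rewrite Hfn; auto.
Qed.

End Metric.

(** * properties of psi / s_seq *)
Definition num (u : list bool) : nat :=
  fold_left (fun acc (c : bool) => (2 * acc + Nat.b2n c)%nat) u 1%nat.

Lemma num_app u c : num (u ++ c :: nil) = (2 * num u + Nat.b2n c)%nat.
Proof. unfold num. rewrite fold_left_app. reflexivity. Qed.

Lemma num_props u : (0 < num u)%nat /\ Nat.log2 (num u) = length u /\
  forall i, (i < length u)%nat -> Nat.testbit (num u) (length u - 1 - i) = nth i u false.
Proof.
  induction u as [|c u IH] using rev_ind.
  - unfold num; simpl. split; [lia|split; auto]. intros i Hi; simpl in Hi; lia.
  - destruct IH as (H0 & H1 & H2). rewrite num_app, length_app. cbn [length].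
    split; [lia|split].
    + destruct c; cbn [Nat.b2n].
      * rewrite Nat.log2_succ_double; auto. lia.
      * rewrite Nat.add_0_r, Nat.log2_double; auto. lia.
    + intros i Hi. destruct (Nat.eq_dec i (length u)) as [->|Hne].
      * replace (length u + 1 - 1 - length u)%nat with 0%nat by lia.
        rewrite nth_middle. destruct c; cbn [Nat.b2n].
        -- apply Nat.testbit_odd_0.
        -- rewrite Nat.add_0_r. apply Nat.testbit_even_0.
      * replace (length u + 1 - 1 - i)%nat with (S (length u - 1 - i)) by lia.
        rewrite app_nth1 by lia. rewrite <- H2 by lia.
        destruct c; cbn [Nat.b2n].
        -- apply Nat.testbit_odd_succ. lia.
        -- rewrite Nat.add_0_r. apply Nat.testbit_even_succ. lia.
Qed.

Lemma nth_map_seq {A : Type} (F : nat -> A) k i d : (i < k)%nat -> nth i (map F (seq 0 k)) d = F i.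
Proof.
  intros H. rewrite (nth_indep _ d (F 0%nat)) by (rewrite length_map, length_seq; auto).
  rewrite map_nth, seq_nth; auto.
Qed.

Lemma psi_num u : psi (num u - 1) = u.
Proof.
  destruct (num_props u) as (H0 & H1 & H2).
  unfold psi. replace (S (num u - 1)) with (num u) by lia. rewrite H1.
  apply nth_ext with (d := false) (d' := false).
  - rewrite length_map, length_seq. auto.
  - intros i Hi. rewrite length_map, length_seq in Hi.
    rewrite nth_map_seq by auto. apply H2; auto.
Qed.

Lemma psi_length n : length (psi n) = Nat.log2 (S n).
Proof. unfold psi. rewrite length_map, length_seq. auto. Qed.

Lemma s_seq_length n : length (s_seq n) = n.
Proof.
  unfold s_seq. rewrite length_app, repeat_length, psi_length.
  pose proof (Nat.log2_lt_lin (S n)). lia.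
Qed.

Lemma s_seq_0 : s_seq 0%nat = nil.
Proof. reflexivity. Qed.

Lemma s_seq_dense u : exists n w, s_seq n = u ++ w.
Proof.
  exists (num u - 1)%nat. unfold s_seq. rewrite psi_num. eauto.
Qed.

Definition onediff (x y : cantor) : Prop :=
  exists p, x p <> y p /\ forall q, q <> p -> x q = y q.

Lemma onediff_sym x y : onediff x y -> onediff y x.
Proof. intros [p [H1 H2]]. exists p. split; auto. intros q Hq. symmetry; auto. Qed.

Lemma G0_onediff x y : G0 x y -> onediff x y.
Proof.
  intros (n & g & -> & ->). exists (length (s_seq n)). unfold concat_seq. split.
  - rewrite Nat.ltb_irrefl, Nat.eqb_refl. discriminate.
  - intros q Hq. destruct (Nat.ltb q (length (s_seq n))); auto.
    apply Nat.eqb_neq in Hq. rewrite Hq. auto.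
Qed.

Lemma no_triangle a b c : onediff a b -> onediff b c -> onediff a c -> False.
Proof.
  intros [p1 [H1 H1']] [p2 [H2 H2']] [p3 [H3 H3']].
  destruct (Nat.eq_dec p3 p1) as [->|N31].
  - destruct (Nat.eq_dec p2 p1) as [->|N21].
    + destruct (a p1), (b p1), (c p1); congruence.
    + apply H2. rewrite <- (H1' p2 N21). apply H3'. auto.
  - destruct (Nat.eq_dec p3 p2) as [->|N32].
    + apply H1. rewrite (H3' p1) by auto. symmetry. apply H2'. auto.
    + apply H3. rewrite H1' by auto. apply H2'. auto.
Qed.

Lemma pre_G0 n b x : pre (s_seq n ++ b :: nil) x ->
  x = concat_seq (s_seq n) b (fun i => x (i + S n)%nat) /\
  flip n x = concat_seq (s_seq n) (negb b) (fun i => x (i + S n)%nat).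
Proof.
  intros H. pose proof (s_seq_length n) as Hl.
  assert (Hlt : forall i, (i < n)%nat -> x i = nth i (s_seq n) false).
  { intros i Hi. rewrite H by (rewrite length_app; simpl; lia). rewrite app_nth1; auto. lia. }
  assert (Hn : x n = b).
  { rewrite H by (rewrite length_app; simpl; lia). rewrite <- Hl at 1. rewrite nth_middle. auto. }
  split; apply functional_extensionality; intros i; unfold concat_seq, flip; rewrite Hl;
    destruct (Nat.ltb_spec i n); destruct (Nat.eqb_spec i n); try lia.
  - apply Hlt; auto.
  - subst i; auto.
  - f_equal; lia.
  - apply Hlt; auto.
  - subst i; rewrite Hn; auto.
  - f_equal; lia.
Qed.



Theorem corollary2p4 (X : Type) (O : (X -> Prop) -> Prop)
  (D : nat -> X -> Prop) (f : nat -> X -> X) :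
  complex_situation O D f ->
  (forall m n x, (m < n)%nat -> D n x -> D m (f n x) -> D m x ->
     f m (f n x) = f m x) ->
  let A := graph_union D f in
  ~ inj_Borel_le cantor_open G0 O A /\
  ~ inj_Borel_le O A cantor_open G0 /\
  ~ inj_Borel_le cantor_open G0 O (inv_rel A) /\
  ~ inj_Borel_le O (inv_rel A) cantor_open G0 /\
  ~ inj_Borel_le O A O (inv_rel A) /\
  ~ inj_Borel_le O (inv_rel A) O A.
Proof.
  intros Hcs Hhyp A.
  destruct Hcs as (HP & [x0] & HDf & Hrng & Hfc & Hfo & Hdiag).
  destruct HP as (d & d_pos & d_zero & d_sym & d_tri & d_open & d_compl & [Dn d_dense]).
  assert (Hfix : forall n x, D n x -> f n x <> x).
  { intros n x Hx He. apply (proj2 (Hdiag x)). exists n; auto. }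
  assert (Hclos : forall x, closure2 O (graph_union D f) x x) by (intros x; apply Hdiag).
  destruct (triangle O d d_pos d_zero d_sym d_tri d_open D f HDf Hfc Hfix Hclos x0)
    as (m & n & x & Hmn & Hn & Hm1 & Hm2).
  assert (Hfmn := Hhyp m n x Hmn Hn Hm1 Hm2).
  assert (Axy : A x (f n x)) by (exists n; auto).
  assert (Ayz : A (f n x) (f m x)) by (exists m; auto).
  assert (Axz : A x (f m x)) by (exists m; auto).
  split; [|split; [|split; [|split; [|split]]]].
  - intros (h & Hh & Hinj & Hhom).
    eapply (key_cantor O d) with (Df := D) (f := f) (t := s_seq) (b := false) (h := h); eauto.
    + apply s_seq_length.
    + apply s_seq_dense.
    + intros k z Hz. destruct (pre_G0 k false z Hz) as [E1 E2].
      apply Hhom. exists k, (fun i => z (i + S k)%nat). split; auto.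
  - intros (h & Hh & Hinj & Hhom).
    apply (no_triangle (h x) (h (f n x)) (h (f m x))); apply G0_onediff, Hhom; auto.
  - intros (h & Hh & Hinj & Hhom).
    eapply (key_cantor O d) with (Df := D) (f := f) (t := s_seq) (b := true) (h := h); eauto.
    + apply s_seq_length.
    + apply s_seq_dense.
    + intros k z Hz. destruct (pre_G0 k true z Hz) as [E1 E2].
      apply (Hhom (flip k z) z). exists k, (fun i => z (i + S k)%nat). split; auto.
  - intros (h & Hh & Hinj & Hhom).
    apply (no_triangle (h x) (h (f n x)) (h (f m x))); apply onediff_sym, G0_onediff, Hhom; auto.
  - intros (h & Hh & Hinj & Hhom).
    eapply (key_X O d) with (Df := D) (f := f) (h := h); eauto.
  - intros (h & Hh & Hinj & Hhom).
    eapply (key_X O d) with (Df := D) (f := f) (h := h); eauto.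
    intros u v Huv. apply (Hhom v u). exact Huv.
Qed.
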